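(* Let $n\ge1$ be an integer. The cubature formula $$6\int_{\triangle^*}f(x_1,x_2,x_3)\,dx_1dx_2dx_3=\frac1{4n^3}\sum_{0\le k_3\le k_2\le k_1\le n}\lambda^{(n)}_{k_1,k_2,k_3}\,f(\tfrac{k_1}n,\tfrac{k_2}n,\tfrac{k_3}n)$$ is exact for every function $f$ on $\triangle^*$ such that the function $\mathbf t\mapsto f(t_1-t_4,t_2-t_4,t_3-t_4)$ on $\triangle_H$ belongs to $\mathcal{TC}_{2n-1}$.
   Context: $\triangle^*=\{x\in\mathbb R^3: 0\le x_3\le x_2\le x_1\le1\}$. Let $\mathbb R^4_H=\{\mathbf t\in\mathbb R^4: t_1+t_2+t_3+t_4=0\}$, $\mathbb Z^4_H=\mathbb Z^4\cap\mathbb R^4_H$, $\mathbb H=\{\mathbf k\in\mathbb Z^4_H: k_1\equiv k_2\equiv k_3\equiv k_4\pmod4\}$, $\phi_{\mathbf k}(\mathbf t)=e^{\frac{\pi i}{2}\mathbf k\cdot\mathbf t}$, $\mathsf{TC}_{\mathbf k}(\mathbf t)=\frac1{24}\sum_{\sigma\in S_4}\phi_{\mathbf k}(\mathbf t\sigma)$ where $\mathbf t\sigma$ permutes coordinates. $\triangle_H=\{\mathbf t\in\mathbb R^4_H: t_1-t_2,\,t_2-t_3,\,t_3-t_4,\,t_1-t_4\in[0,1]\}$, and $\mathcal{TC}_m=\operatorname{span}\{\mathsf{TC}_{\mathbf k}:\mathbf k\in\mathbb H,\ k_4\le k_3\le k_2\le k_1\le k_4+4m\}$. The weights: $\lambda^{(n)}_{k_1,k_2,k_3}=24$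 if none of the relations (a) $k_1=k_2$, (b) $k_2=k_3$, (c) $k_3=0$, (d) $k_1=n$ holds; $12$ if exactly one holds; $6$ if exactly two hold and they are $\{(a),(c)\}$ or $\{(b),(d)\}$; $4$ if exactly two other ones hold; $1$ if three hold. (Equivalently $\lambda^{(n)}_{k}=\lambda^{(n)}_{\mathbf j}$ for the $\mathbf j\in\mathbb H$ with $k_i=\frac14(j_i-j_4)$, $i=1,2,3$.) *)

(* Defs.v *)
From Stdlib Require Import Reals ZArith List.
From Coquelicot Require Import Coquelicot.
Open Scope R_scope.

Definition CRInt (f : R -> C) (a b : R) : C :=
  @RInt C_R_CompleteNormedModule f a b.

Definition int_simplex (f : R -> R -> R -> C) : C :=
  CRInt (fun x1 => CRInt (fun x2 => CRInt (fun x3 => f x1 x2 x3) 0 x2) 0 x1) 0 1.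

Definition R4 := (R * R * R * R)%type.
Definition Z4 := (Z * Z * Z * Z)%type.

Definition r4 (t : R4) (i : nat) : R :=
  match t with (t1, t2, t3, t4) =>
    match i with 0%nat => t1 | 1%nat => t2 | 2%nat => t3 | _ => t4 end
  end.

Definition S4 : list (nat * nat * nat * nat) :=
  flat_map (fun a => flat_map (fun b => flat_map (fun c => flat_map (fun d =>
     if (Nat.eqb a b || Nat.eqb a c || Nat.eqb a d || Nat.eqb b c
         || Nat.eqb b d || Nat.eqb c d)%bool
     then nil else (a, b, c, d) :: nil)
     (seq 0 4)) (seq 0 4)) (seq 0 4)) (seq 0 4).

Definition permute (t : R4) (s : nat * nat * nat * nat) : R4 :=
  match s with (a, b, c, d) => (r4 t a, r4 t b, r4 t c, r4 t d) end.

Definition dot (k : Z4) (t : R4) : R :=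
  match k, t with (k1, k2, k3, k4), (t1, t2, t3, t4) =>
    IZR k1 * t1 + IZR k2 * t2 + IZR k3 * t3 + IZR k4 * t4 end.

Definition cexpi (theta : R) : C := (cos theta, sin theta).

Definition phi (k : Z4) (t : R4) : C := cexpi (PI / 2 * dot k t).

Definition TC (k : Z4) (t : R4) : C :=
  Cmult (RtoC (/ 24))
    (fold_right (fun s acc => Cplus (phi k (permute t s)) acc) (RtoC 0) S4).

Definition in_triH (t : R4) : Prop :=
  match t with (t1, t2, t3, t4) =>
    t1 + t2 + t3 + t4 = 0 /\
    0 <= t1 - t2 <= 1 /\ 0 <= t2 - t3 <= 1 /\
    0 <= t3 - t4 <= 1 /\ 0 <= t1 - t4 <= 1 end.

Definition inH (k : Z4) : Prop :=
  match k with (k1, k2, k3, k4) =>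
    (k1 + k2 + k3 + k4 = 0)%Z /\
    (k1 mod 4 = k2 mod 4)%Z /\ (k2 mod 4 = k3 mod 4)%Z /\
    (k3 mod 4 = k4 mod 4)%Z end.

Definition TC_index (m : Z) (k : Z4) : Prop :=
  inH k /\
  match k with (k1, k2, k3, k4) =>
    (k4 <= k3 /\ k3 <= k2 /\ k2 <= k1 /\ k1 <= k4 + 4 * m)%Z end.

(* g (a function on triangle_H) belongs to TC_m = span{TC_k : k in index set}:
   g agrees on triangle_H with a finite linear combination of such TC_k. *)
Definition in_TC (m : Z) (g : R4 -> C) : Prop :=
  exists L : list (C * Z4),
    List.Forall (fun p => TC_index m (snd p)) L /\
    forall t, in_triH t ->
      g t = fold_right (fun p acc => Cplus (Cmult (fst p) (TC (snd p) t)) acc)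
                       (RtoC 0) L.

Definition lambda (n k1 k2 k3 : nat) : R :=
  let a := Nat.eqb k1 k2 in
  let b := Nat.eqb k2 k3 in
  let c := Nat.eqb k3 0 in
  let d := Nat.eqb k1 n in
  let cnt := ((if a then 1 else 0) + (if b then 1 else 0) +
              (if c then 1 else 0) + (if d then 1 else 0))%nat in
  match cnt with
  | 0%nat => 24
  | 1%nat => 12
  | 2%nat => if ((a && c) || (b && d))%bool then 6 else 4
  | 3%nat => 1
  | _ => 1 (* four relations never hold simultaneously when n >= 1 *)
  end.

Definition cubature_sum (n : nat) (F : nat -> nat -> nat -> C) : C :=
  fold_right Cplus (RtoC 0)
    (flat_map (fun k1 => flat_map (fun k2 => map (fun k3 => F k1 k2 k3)
        (seq 0 (S k2))) (seq 0 (S k1))) (seq 0 (S n))).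

(* Main.v *)
Require Import Defs.
From Stdlib Require Import Reals ZArith List.
From Coquelicot Require Import Coquelicot.
From Stdlib Require Import Lia Lra Permutation.
Open Scope R_scope.

Lemma C_eq (a b : C) : fst a = fst b -> snd a = snd b -> a = b.
Proof. destruct a, b; simpl; intros; subst; reflexivity. Qed.

Lemma cexpi_add a b : cexpi (a + b) = Cmult (cexpi a) (cexpi b).
Proof. unfold cexpi; apply C_eq; simpl; rewrite ?cos_plus, ?sin_plus; ring. Qed.

Lemma cexpi_0 : cexpi 0 = RtoC 1.
Proof. unfold cexpi; rewrite cos_0, sin_0; reflexivity. Qed.

Lemma is_derive_pair (f g : R -> R) x df dg :
  is_derive f x df -> is_derive g x dg ->
  @is_derive R_AbsRing C_R_NormedModule (fun t => ((f t, g t) : C)) x ((df, dg) : C).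
Proof.
  intros Hf Hg.
  apply (is_derive_ext (fun t => @plus C_R_NormedModule (scal (f t) ((1,0):C)) (scal (g t) ((0,1):C)))).
  { intros t; apply C_eq; simpl; unfold scal, plus; simpl; unfold mult; simpl; ring. }
  replace ((df,dg):C) with (@plus C_R_NormedModule (scal df ((1,0):C)) (scal dg ((0,1):C))).
  2:{ apply C_eq; simpl; unfold scal, plus; simpl; unfold mult; simpl; ring. }
  apply is_derive_plus; apply (@is_derive_scal_l R_AbsRing C_R_NormedModule); assumption.
Qed.

Lemma is_derive_fst (h : R -> C) x d :
  @is_derive R_AbsRing C_R_NormedModule h x d ->
  is_derive (fun t => fst (h t)) x (fst d).
Proof.
  intros H. unfold is_derive in *.
  eapply filterdiff_ext_lin.
  - apply (filterdiff_comp' h (fun t : C_R_NormedModule => fst t) x _ (fun t : C_R_NormedModule => fst t) H).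
    apply filterdiff_linear. apply (@is_linear_fst R_AbsRing R_NormedModule R_NormedModule).
  - intros y. simpl. reflexivity.
Qed.

Lemma is_derive_snd (h : R -> C) x d :
  @is_derive R_AbsRing C_R_NormedModule h x d ->
  is_derive (fun t => snd (h t)) x (snd d).
Proof.
  intros H. unfold is_derive in *.
  eapply filterdiff_ext_lin.
  - apply (filterdiff_comp' h (fun t : C_R_NormedModule => snd t) x _ (fun t : C_R_NormedModule => snd t) H).
    apply filterdiff_linear. apply (@is_linear_snd R_AbsRing R_NormedModule R_NormedModule).
  - intros y. simpl. reflexivity.
Qed.

Lemma is_derive_Cmult (f g : R -> C) x df dg :
  @is_derive R_AbsRing C_R_NormedModule f x df ->
  @is_derive R_AbsRing C_R_NormedModule g x dg ->
  @is_derive R_AbsRing C_R_NormedModule (fun t => Cmult (f t) (g t)) x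
     (Cplus (Cmult df (g x)) (Cmult (f x) dg)).
Proof.
  intros Hf Hg.
  pose proof (is_derive_fst _ _ _ Hf) as F1.
  pose proof (is_derive_snd _ _ _ Hf) as F2.
  pose proof (is_derive_fst _ _ _ Hg) as G1.
  pose proof (is_derive_snd _ _ _ Hg) as G2.
  apply (is_derive_ext (fun t => ((fst (f t) * fst (g t) - snd (f t) * snd (g t),
                                   fst (f t) * snd (g t) + snd (f t) * fst (g t)) : C))).
  { intros t. destruct (f t), (g t); reflexivity. }
  replace (Cplus (Cmult df (g x)) (Cmult (f x) dg)) with
   (((fst df * fst (g x) + fst (f x) * fst dg) - (snd df * snd (g x) + snd (f x) * snd dg),
     (fst df * snd (g x) + fst (f x) * snd dg) + (snd df * fst (g x) + snd (f x) * fst dg)) : C).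
  2:{ destruct df, dg, (f x), (g x); apply C_eq; simpl; ring. }
  apply is_derive_pair.
  - apply (@is_derive_minus R_AbsRing R_NormedModule); apply Derive.is_derive_mult; assumption.
  - apply (@is_derive_plus R_AbsRing R_NormedModule); apply Derive.is_derive_mult; assumption.
Qed.

Definition e (m : Z) (x : R) : C := cexpi (PI / 2 * IZR m * x).

Lemma is_derive_cexpi_lin (a x : R) :
  @is_derive R_AbsRing C_R_NormedModule (fun t => cexpi (a * t)) x
     (Cmult ((0, a) : C) (cexpi (a * x))).
Proof.
  unfold cexpi.
  replace (Cmult ((0, a) : C) (cos (a * x), sin (a * x))) with
     ((- a * sin (a * x), a * cos (a * x)) : C).
  2:{ apply C_eq; simpl; ring. }
  apply is_derive_pair.
  - auto_derive; [trivial | ring].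
  - auto_derive; [trivial | ring].
Qed.

Notation CD := (@is_derive R_AbsRing C_R_NormedModule).
Notation CI := (@is_RInt C_R_NormedModule).

Lemma is_RInt_Cmult_l (f : R -> C) a b l c :
  CI f a b l -> CI (fun x => Cmult c (f x)) a b (Cmult c l).
Proof.
  intros H.
  pose proof (@is_RInt_fct_extend_fst R_NormedModule R_NormedModule f a b l H) as H1.
  pose proof (@is_RInt_fct_extend_snd R_NormedModule R_NormedModule f a b l H) as H2.
  replace (Cmult c l) with ((fst c * fst l - snd c * snd l, fst c * snd l + snd c * fst l) : C)
    by (destruct c, l; reflexivity).
  apply (@is_RInt_fct_extend_pair R_NormedModule R_NormedModule).
  - simpl.
    apply (is_RInt_ext (fun x => minus (scal (fst c) (fst (f x))) (scal (snd c) (snd (f x))))).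
    { intros x _. destruct c, (f x); simpl. unfold minus, plus, opp, scal; simpl. unfold mult; simpl. ring. }
    apply (@is_RInt_minus R_NormedModule); apply (@is_RInt_scal R_NormedModule); assumption.
  - simpl.
    apply (is_RInt_ext (fun x => plus (scal (fst c) (snd (f x))) (scal (snd c) (fst (f x))))).
    { intros x _. destruct c, (f x); simpl. unfold plus, scal; simpl. unfold mult; simpl. ring. }
    apply (@is_RInt_plus R_NormedModule); apply (@is_RInt_scal R_NormedModule); assumption.
Qed.

Lemma is_RInt_Cplus (f g : R -> C) a b l1 l2 :
  CI f a b l1 -> CI g a b l2 -> CI (fun x => Cplus (f x) (g x)) a b (Cplus l1 l2).
Proof. intros H1 H2. apply (@is_RInt_plus C_R_NormedModule); assumption. Qed.

Lemma CRInt_unique f a b l : CI f a b l -> CRInt f a b = l.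
Proof. intros H. unfold CRInt. apply (@is_RInt_unique C_R_CompleteNormedModule). exact H. Qed.

Lemma CRInt_ext f g a b : (forall x, Rmin a b < x < Rmax a b -> f x = g x) -> CRInt f a b = CRInt g a b.
Proof. intros H. unfold CRInt. apply (@RInt_ext C_R_CompleteNormedModule). exact H. Qed.

Definition Dif (h : R -> C) := forall x, exists d, CD h x d.

Lemma Dif_cont h : Dif h -> forall x, @continuous R_UniformSpace C_R_NormedModule h x.
Proof. intros H x. destruct (H x) as [d Hd]. apply (@ex_derive_continuous R_AbsRing C_R_NormedModule). exists d; exact Hd. Qed.

Lemma Dif_CI h a b : Dif h -> CI h a b (CRInt h a b).
Proof.
  intros H. unfold CRInt. apply (@RInt_correct C_R_CompleteNormedModule).
  apply (@ex_RInt_continuous C_R_CompleteNormedModule). intros z _. apply Dif_cont; exact H.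
Qed.

Lemma Dif_mult f g : Dif f -> Dif g -> Dif (fun t => Cmult (f t) (g t)).
Proof.
  intros Hf Hg x. destruct (Hf x) as [df Hdf], (Hg x) as [dg Hdg].
  eexists. apply is_derive_Cmult; eassumption.
Qed.

Definition Prim (h : R -> C) (x : R) : C := CRInt h 0 x.

Lemma Prim_derive h : Dif h -> forall x, CD (Prim h) x (h x).
Proof.
  intros H x. apply (@is_derive_RInt C_R_NormedModule h (Prim h) 0 x).
  - apply filter_forall. intros b. apply Dif_CI; exact H.
  - apply Dif_cont; exact H.
Qed.

Lemma Dif_Prim h : Dif h -> Dif (Prim h).
Proof. intros H x. exists (h x). apply Prim_derive; exact H. Qed.

Lemma Prim_0 h : Prim h 0 = RtoC 0.
Proof. unfold Prim, CRInt. rewrite RInt_point. reflexivity. Qed.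

Lemma FTC (F dF : R -> C) a b :
  (forall x, CD F x (dF x)) -> Dif dF -> CI dF a b (Cminus (F b) (F a)).
Proof.
  intros H1 H2.
  replace (Cminus (F b) (F a)) with (@minus C_R_NormedModule (F b) (F a)).
  2:{ apply C_eq; simpl; unfold minus, plus, opp; simpl; unfold plus, opp; simpl; ring. }
  apply (@is_RInt_derive C_R_CompleteNormedModule).
  - intros x _. apply H1.
  - intros x _. apply Dif_cont; exact H2.
Qed.

Definition K2 (b c : R -> C) (x : R) : C := CRInt (fun y => Cmult (b y) (Prim c y)) 0 x.

Lemma K2_sym b c x : Dif b -> Dif c ->
  Cplus (K2 b c x) (K2 c b x) = Cmult (Prim b x) (Prim c x).
Proof.
  intros Hb Hc.
  assert (D1 : Dif (fun y => Cmult (b y) (Prim c y))) by (apply Dif_mult; [auto | apply Dif_Prim; auto]).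
  assert (D2 : Dif (fun y => Cmult (c y) (Prim b y))) by (apply Dif_mult; [auto | apply Dif_Prim; auto]).
  pose proof (is_RInt_Cplus _ _ _ _ _ _ (Dif_CI _ 0 x D1) (Dif_CI _ 0 x D2)) as H.
  assert (H' : CI (fun y => Cplus (Cmult (b y) (Prim c y)) (Cmult (c y) (Prim b y))) 0 x
       (Cminus (Cmult (Prim b x) (Prim c x)) (Cmult (Prim b 0) (Prim c 0)))).
  { eapply is_RInt_ext; [| apply (FTC (fun t => Cmult (Prim b t) (Prim c t))
          (fun y => Cplus (Cmult (b y) (Prim c y)) (Cmult (Prim b y) (c y))))].
    - intros y _. apply C_eq; simpl; ring.
    - intros y. apply is_derive_Cmult; apply Prim_derive; auto.
    - intros y. destruct (D1 y) as [d1 H1], (D2 y) as [d2 H2].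
      eexists. eapply is_derive_ext; [| apply (@is_derive_plus R_AbsRing C_R_NormedModule _ _ y _ _ H1 H2)].
      intros t. rewrite (Cmult_comm (Prim b t) (c t)). reflexivity. }
  rewrite !Prim_0 in H'.
  unfold K2. rewrite <- (CRInt_unique _ _ _ _ H).
  transitivity (Cminus (Cmult (Prim b x) (Prim c x)) (Cmult (RtoC 0) (RtoC 0))).
  - rewrite <- (CRInt_unique _ _ _ _ H'). reflexivity.
  - apply C_eq; simpl; ring.
Qed.

Lemma CI_uniq f g a b l1 l2 : CI f a b l1 -> CI g a b l2 -> (forall x, f x = g x) -> l1 = l2.
Proof.
  intros H1 H2 E. rewrite <- (CRInt_unique _ _ _ _ H2).
  symmetry. apply CRInt_unique. eapply is_RInt_ext; [| exact H1]. intros; apply E.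
Qed.

Definition TI (g : R -> R -> R -> C) (v : C) : Prop :=
  exists G H, (forall x1 x2, CI (g x1 x2) 0 x2 (G x1 x2)) /\
              (forall x1, CI (G x1) 0 x1 (H x1)) /\ CI H 0 1 v.

Lemma TI_int g v : TI g v -> int_simplex g = v.
Proof.
  intros (G & H & H1 & H2 & H3). unfold int_simplex.
  rewrite <- (CRInt_unique _ _ _ _ H3). apply CRInt_ext. intros x1 _.
  rewrite <- (CRInt_unique _ _ _ _ (H2 x1)). apply CRInt_ext. intros x2 _.
  apply (CRInt_unique _ _ _ _ (H1 x1 x2)).
Qed.

Lemma TI_plus g1 g2 v1 v2 : TI g1 v1 -> TI g2 v2 ->
  TI (fun x1 x2 x3 => Cplus (g1 x1 x2 x3) (g2 x1 x2 x3)) (Cplus v1 v2).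
Proof.
  intros (G1 & H1 & A1 & B1 & C1) (G2 & H2 & A2 & B2 & C2).
  exists (fun x1 x2 => Cplus (G1 x1 x2) (G2 x1 x2)), (fun x1 => Cplus (H1 x1) (H2 x1)).
  repeat split; intros; apply is_RInt_Cplus; auto.
Qed.

Lemma TI_scal c g v : TI g v -> TI (fun x1 x2 x3 => Cmult c (g x1 x2 x3)) (Cmult c v).
Proof.
  intros (G & H & A & B & D).
  exists (fun x1 x2 => Cmult c (G x1 x2)), (fun x1 => Cmult c (H x1)).
  repeat split; intros; apply is_RInt_Cmult_l; auto.
Qed.

Lemma TI_zero : TI (fun _ _ _ => RtoC 0) (RtoC 0).
Proof.
  exists (fun _ _ => RtoC 0), (fun _ => RtoC 0).
  assert (Z : forall a b, CI (fun _ => RtoC 0) a b (RtoC 0)).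
  { intros a b. pose proof (@is_RInt_const C_R_NormedModule a b (RtoC 0)) as H.
    match type of H with CI _ _ _ ?v => replace v with (RtoC 0) in H end. exact H.
    apply C_eq; simpl; unfold scal; simpl; unfold mult; simpl; ring. }
  repeat split; intros; apply Z.
Qed.

Lemma TI_ext g g' v : (forall x1 x2 x3, g x1 x2 x3 = g' x1 x2 x3) -> TI g v -> TI g' v.
Proof.
  intros E (G & H & A & B & D). exists G, H. repeat split; auto.
  intros x1 x2. eapply is_RInt_ext; [| apply A]. intros; apply E.
Qed.

Lemma TI_eqv g v v' : v = v' -> TI g v -> TI g v'.
Proof. intros ->; auto. Qed.

Lemma Dif_plus f g : Dif f -> Dif g -> Dif (fun t => Cplus (f t) (g t)).
Proof.
  intros Hf Hg x. destruct (Hf x) as [df Hdf], (Hg x) as [dg Hdg].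
  exists (Cplus df dg). apply (@is_derive_plus R_AbsRing C_R_NormedModule _ _ x _ _ Hdf Hdg).
Qed.

Definition J3 (a b c : R -> C) : C := CRInt (fun x => Cmult (a x) (K2 b c x)) 0 1.

Lemma Dif_K2 b c : Dif b -> Dif c -> Dif (K2 b c).
Proof. intros. apply Dif_Prim. apply Dif_mult; auto. apply Dif_Prim; auto. Qed.

Lemma TI_prod a b c : Dif a -> Dif b -> Dif c ->
  TI (fun x1 x2 x3 => Cmult (Cmult (a x1) (b x2)) (c x3)) (J3 a b c).
Proof.
  intros Ha Hb Hc.
  exists (fun x1 x2 => Cmult (Cmult (a x1) (b x2)) (Prim c x2)), (fun x1 => Cmult (a x1) (K2 b c x1)).
  repeat split.
  - intros x1 x2. apply is_RInt_Cmult_l. apply Dif_CI; auto.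
  - intros x1. eapply is_RInt_ext; [| apply is_RInt_Cmult_l; apply (Dif_CI (fun y => Cmult (b y) (Prim c y)))].
    + intros; simpl. apply C_eq; simpl; ring.
    + apply Dif_mult; auto. apply Dif_Prim; auto.
  - apply Dif_CI. apply Dif_mult; auto. apply Dif_K2; auto.
Qed.

Lemma J3_pair a b c : Dif a -> Dif b -> Dif c ->
  CI (fun x => Cmult (a x) (Cmult (Prim b x) (Prim c x))) 0 1 (Cplus (J3 a b c) (J3 a c b)).
Proof.
  intros Ha Hb Hc.
  pose proof (is_RInt_Cplus _ _ _ _ _ _
     (Dif_CI (fun x => Cmult (a x) (K2 b c x)) 0 1 (Dif_mult _ _ Ha (Dif_K2 _ _ Hb Hc)))
     (Dif_CI (fun x => Cmult (a x) (K2 c b x)) 0 1 (Dif_mult _ _ Ha (Dif_K2 _ _ Hc Hb)))) as H.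
  eapply is_RInt_ext; [| exact H]. intros x _. simpl.
  rewrite <- K2_sym by auto. apply C_eq; simpl; ring.
Qed.

Lemma cube3 a b c : Dif a -> Dif b -> Dif c ->
  Cplus (Cplus (Cplus (J3 a b c) (J3 a c b)) (Cplus (J3 b a c) (J3 b c a)))
        (Cplus (J3 c a b) (J3 c b a))
  = Cmult (Cmult (Prim a 1) (Prim b 1)) (Prim c 1).
Proof.
  intros Ha Hb Hc.
  pose proof (is_RInt_Cplus _ _ _ _ _ _ (is_RInt_Cplus _ _ _ _ _ _
     (J3_pair a b c Ha Hb Hc) (J3_pair b a c Hb Ha Hc)) (J3_pair c a b Hc Ha Hb)) as H.
  assert (H' : CI (fun y => Cplus (Cmult (Cplus (Cmult (a y) (Prim b y)) (Cmult (Prim a y) (b y))) (Prim c y))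
                                   (Cmult (Cmult (Prim a y) (Prim b y)) (c y))) 0 1
             (Cminus (Cmult (Cmult (Prim a 1) (Prim b 1)) (Prim c 1))
                     (Cmult (Cmult (Prim a 0) (Prim b 0)) (Prim c 0)))).
  { apply (FTC (fun t => Cmult (Cmult (Prim a t) (Prim b t)) (Prim c t))).
    - intros y. apply is_derive_Cmult; [apply is_derive_Cmult|]; apply Prim_derive; auto.
    - apply Dif_plus; (apply Dif_mult; [|auto; apply Dif_Prim; auto]).
      + apply Dif_plus; apply Dif_mult; auto; apply Dif_Prim; auto.
      + apply Dif_mult; apply Dif_Prim; auto. }
  rewrite !Prim_0 in H'.
  transitivity (Cminus (Cmult (Cmult (Prim a 1) (Prim b 1)) (Prim c 1)) (Cmult (Cmult (RtoC 0) (RtoC 0)) (RtoC 0))).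
  - eapply CI_uniq; [exact H | exact H' |]. intros x. simpl. apply C_eq; simpl; ring.
  - apply C_eq; simpl; ring.
Qed.

Definition sumC (l : list C) : C := fold_right Cplus (RtoC 0) l.

Definition tx (x1 x2 x3 : R) : R4 :=
  (x1 - (x1+x2+x3)/4, x2 - (x1+x2+x3)/4, x3 - (x1+x2+x3)/4, -((x1+x2+x3)/4)).

Definition P3 (a b c : Z) (x1 x2 x3 : R) : C := Cmult (Cmult (e a x1) (e b x2)) (e c x3).

Definition trip24 (k1 k2 k3 k4 : Z) : list (Z * Z * Z) :=
  (k1,k2,k3)::(k1,k2,k4)::(k1,k3,k2)::(k1,k4,k2)::(k1,k3,k4)::(k1,k4,k3)::
  (k2,k1,k3)::(k2,k1,k4)::(k3,k1,k2)::(k4,k1,k2)::(k3,k1,k4)::(k4,k1,k3)::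
  (k2,k3,k1)::(k2,k4,k1)::(k3,k2,k1)::(k4,k2,k1)::(k3,k4,k1)::(k4,k3,k1)::
  (k2,k3,k4)::(k2,k4,k3)::(k3,k2,k4)::(k4,k2,k3)::(k3,k4,k2)::(k4,k3,k2)::nil.

Definition app3 (F : Z -> Z -> Z -> C) (t : Z * Z * Z) : C :=
  match t with (a, b, c) => F a b c end.

Lemma P3_eq th a b c x1 x2 x3 :
  th = PI/2*IZR a*x1 + PI/2*IZR b*x2 + PI/2*IZR c*x3 -> cexpi th = P3 a b c x1 x2 x3.
Proof. intros ->. unfold P3, e. rewrite !cexpi_add. reflexivity. Qed.

Lemma S4_eq : S4 = (0,1,2,3)%nat::(0,1,3,2)%nat::(0,2,1,3)%nat::(0,2,3,1)%nat::(0,3,1,2)%nat::(0,3,2,1)%nat::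
  (1,0,2,3)%nat::(1,0,3,2)%nat::(1,2,0,3)%nat::(1,2,3,0)%nat::(1,3,0,2)%nat::(1,3,2,0)%nat::
  (2,0,1,3)%nat::(2,0,3,1)%nat::(2,1,0,3)%nat::(2,1,3,0)%nat::(2,3,0,1)%nat::(2,3,1,0)%nat::
  (3,0,1,2)%nat::(3,0,2,1)%nat::(3,1,0,2)%nat::(3,1,2,0)%nat::(3,2,0,1)%nat::(3,2,1,0)%nat::nil.
Proof. reflexivity. Qed.

Lemma TC_expand k1 k2 k3 k4 x1 x2 x3 : (k1 + k2 + k3 + k4 = 0)%Z ->
  TC (k1,k2,k3,k4) (tx x1 x2 x3) =
  Cmult (RtoC (/24)) (sumC (map (app3 (fun a b c => P3 a b c x1 x2 x3)) (trip24 k1 k2 k3 k4))).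
Proof.
  intros hk.
  assert (E : IZR k4 = - IZR k1 - IZR k2 - IZR k3).
  { replace k4 with (- k1 - k2 - k3)%Z by lia. rewrite !minus_IZR, opp_IZR. ring. }
  unfold TC. rewrite S4_eq. simpl fold_right. unfold sumC. simpl map. simpl fold_right.
  f_equal. unfold phi, permute, dot, tx. simpl r4.
  repeat (f_equal; [apply P3_eq; rewrite E; field|]). f_equal. apply P3_eq; rewrite E; field.
Qed.

Lemma e_derive m x : CD (e m) x (Cmult ((0, PI/2*IZR m) : C) (e m x)).
Proof. unfold e. apply (is_derive_cexpi_lin (PI/2*IZR m) x). Qed.

Lemma e_Dif m : Dif (e m).
Proof. intros x. eexists. apply e_derive. Qed.

Lemma e_at0 m : e m 0 = RtoC 1.
Proof. unfold e. rewrite Rmult_0_r. apply cexpi_0. Qed.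

Lemma CD_mult_const f x df c : CD f x df -> CD (fun t => Cmult (f t) c) x (Cmult df c).
Proof.
  intros H.
  replace (Cmult df c) with (Cplus (Cmult df c) (Cmult (f x) (@zero C_R_NormedModule))).
  - apply is_derive_Cmult; [exact H | apply (@is_derive_const R_AbsRing C_R_NormedModule)].
  - apply C_eq; simpl; unfold zero; simpl; ring.
Qed.

Lemma Prim_e_nz m : m <> 0%Z ->
  Prim (e m) 1 = Cdiv (Cminus (e m 1) (RtoC 1)) ((0, PI/2*IZR m) : C).
Proof.
  intros Hm.
  assert (Ha : ((0, PI/2*IZR m) : C) <> RtoC 0).
  { intros H. injection H. intros H1. apply Hm. apply eq_IZR.
    assert (PI <> 0) by (pose proof PI_RGT_0; lra). nra. }
  assert (H : CI (e m) 0 1 (Cminus (Cmult (e m 1) (Cinv ((0, PI/2*IZR m) : C)))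
                                   (Cmult (e m 0) (Cinv ((0, PI/2*IZR m) : C))))).
  { eapply is_RInt_ext; [| apply (FTC (fun t => Cmult (e m t) (Cinv ((0, PI/2*IZR m) : C)))
         (fun t => Cmult (Cmult ((0, PI/2*IZR m) : C) (e m t)) (Cinv ((0, PI/2*IZR m) : C))))].
    - intros x _. match goal with |- ?a = ?b => change (@eq C a b) end. cbv beta. field. exact Ha.
    - intros x. apply CD_mult_const. apply e_derive.
    - intros x. eexists. apply CD_mult_const. apply is_derive_Cmult.
      apply (@is_derive_const R_AbsRing C_R_NormedModule). apply e_derive. }
  unfold Prim. rewrite (CRInt_unique _ _ _ _ H). rewrite e_at0. field. exact Ha.
Qed.

Lemma Prim_e_0 : Prim (e 0) 1 = RtoC 1.
Proof.
  unfold Prim. apply CRInt_unique.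
  pose proof (@is_RInt_const C_R_NormedModule 0 1 (RtoC 1)) as H.
  match type of H with CI _ _ _ ?v => replace v with (RtoC 1) in H end.
  - eapply is_RInt_ext; [| exact H]. intros x _. unfold e. rewrite Rmult_0_r, Rmult_0_l. symmetry; apply cexpi_0.
  - apply C_eq; simpl; unfold scal; simpl; unfold mult; simpl; ring.
Qed.

Lemma cexpi_2piZ q : cexpi (2*PI*IZR q) = RtoC 1.
Proof.
  unfold cexpi. destruct (Z_le_gt_dec 0 q) as [Hq|Hq].
  - rewrite <- (Z2Nat.id q) by lia. rewrite <- INR_IZR_INZ.
    pose proof (cos_period 0 (Z.to_nat q)) as H1. pose proof (sin_period 0 (Z.to_nat q)) as H2.
    rewrite Rplus_0_l in H1, H2. rewrite cos_0 in H1. rewrite sin_0 in H2.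
    replace (2 * PI * INR (Z.to_nat q)) with (2 * INR (Z.to_nat q) * PI) by ring.
    rewrite H1, H2. reflexivity.
  - replace q with (- Z.of_nat (Z.to_nat (- q)))%Z by lia. rewrite opp_IZR, <- INR_IZR_INZ.
    pose proof (cos_period 0 (Z.to_nat (-q))) as H1. pose proof (sin_period 0 (Z.to_nat (-q))) as H2.
    rewrite Rplus_0_l in H1, H2. rewrite cos_0 in H1. rewrite sin_0 in H2.
    replace (2 * PI * - INR (Z.to_nat (-q))) with (- (2 * INR (Z.to_nat (-q)) * PI)) by ring.
    rewrite cos_neg, sin_neg, H1, H2, Ropp_0. reflexivity.
Qed.

Lemma cexpi_mod4 a b : (a mod 4 = b mod 4)%Z -> cexpi (PI/2*IZR a) = cexpi (PI/2*IZR b).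
Proof.
  intros H.
  assert (E : a = (b + 4 * (a / 4 - b / 4))%Z).
  { pose proof (Z.div_mod a 4 ltac:(lia)). pose proof (Z.div_mod b 4 ltac:(lia)). lia. }
  rewrite E, plus_IZR, mult_IZR.
  replace (PI / 2 * (IZR b + IZR 4 * IZR (a / 4 - b / 4))) with
     (PI / 2 * IZR b + 2 * PI * IZR (a / 4 - b / 4)) by (simpl; field).
  rewrite cexpi_add, cexpi_2piZ. apply C_eq; simpl; ring.
Qed.

Definition delta (k : Z4) : C := match k with (k1,k2,k3,k4) =>
  if (Z.eqb k1 0 && Z.eqb k2 0 && Z.eqb k3 0 && Z.eqb k4 0)%bool then RtoC 1 else RtoC 0 end.

Definition E1 (m : Z) : C := Prim (e m) 1.

Lemma E1_zero_case m : (m mod 4 = 0)%Z -> E1 m = if Z.eqb m 0 then RtoC 1 else RtoC 0.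
Proof.
  intros H. unfold E1. destruct (Z.eqb_spec m 0) as [->|Hm].
  - apply Prim_e_0.
  - rewrite Prim_e_nz by auto.
    assert (e m 1 = RtoC 1).
    { unfold e. rewrite Rmult_1_r. rewrite (cexpi_mod4 m 0) by (rewrite H; reflexivity).
      rewrite Rmult_0_r. apply cexpi_0. }
    rewrite H0. replace (Cminus (RtoC 1) (RtoC 1)) with (RtoC 0) by (apply C_eq; simpl; ring).
    unfold Cdiv. apply C_eq; simpl; ring.
Qed.

Lemma E1_nz m : m <> 0%Z ->
  E1 m = Cmult (Cdiv (Cminus (e m 1) (RtoC 1)) ((0, PI/2) : C)) (RtoC (/ IZR m)).
Proof.
  intros Hm. unfold E1. rewrite Prim_e_nz by auto.
  assert (HI : IZR m <> 0) by (apply not_0_IZR; auto).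
  assert (HP : PI <> 0) by (pose proof PI_RGT_0; lra).
  replace ((0, PI/2*IZR m) : C) with (Cmult ((0, PI/2) : C) (RtoC (IZR m))) by (apply C_eq; simpl; ring).
  rewrite RtoC_inv by auto.
  field. split.
  - intros H. apply HI. injection H. auto.
  - intros H. injection H. intros. lra.
Qed.

Lemma cont_alg k1 k2 k3 k4 : inH (k1,k2,k3,k4) ->
  Cmult (RtoC 6) (Cmult (RtoC (/24))
   (Cplus (Cplus (Cplus (Cmult (Cmult (E1 k1) (E1 k2)) (E1 k3)) (Cmult (Cmult (E1 k1) (E1 k2)) (E1 k4)))
                 (Cmult (Cmult (E1 k1) (E1 k3)) (E1 k4))) (Cmult (Cmult (E1 k2) (E1 k3)) (E1 k4))))
  = delta (k1,k2,k3,k4).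
Proof.
  intros (hs & h12 & h23 & h34).
  destruct (Z.eq_dec k1 0) as [z1|z1]; [|destruct (Z.eq_dec k2 0) as [z2|z2];
    [|destruct (Z.eq_dec k3 0) as [z3|z3]; [|destruct (Z.eq_dec k4 0) as [z4|z4]]]].
  5:{
    assert (ez2 : e k2 1 = e k1 1) by (unfold e; rewrite !Rmult_1_r; apply cexpi_mod4; lia).
    assert (ez3 : e k3 1 = e k1 1) by (unfold e; rewrite !Rmult_1_r; apply cexpi_mod4; lia).
    assert (ez4 : e k4 1 = e k1 1) by (unfold e; rewrite !Rmult_1_r; apply cexpi_mod4; lia).
    rewrite !E1_nz by auto. rewrite ez2, ez3, ez4.
    set (w := Cdiv (Cminus (e k1 1) (RtoC 1)) ((0, PI/2) : C)).
    assert (S : / IZR k1 * / IZR k2 * / IZR k3 + / IZR k1 * / IZR k2 * / IZR k4 +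
                / IZR k1 * / IZR k3 * / IZR k4 + / IZR k2 * / IZR k3 * / IZR k4 = 0).
    { assert (IZR k4 = - IZR k1 - IZR k2 - IZR k3) as E4.
      { replace k4 with (-k1-k2-k3)%Z by lia. rewrite !minus_IZR, opp_IZR. ring. }
      assert (IZR k1 <> 0) by (apply not_0_IZR; auto).
      assert (IZR k2 <> 0) by (apply not_0_IZR; auto).
      assert (IZR k3 <> 0) by (apply not_0_IZR; auto).
      assert (IZR k4 <> 0) by (apply not_0_IZR; auto).
      rewrite E4 in *. field. auto. }
    unfold delta. destruct (Z.eqb_spec k1 0); [contradiction|]. simpl.
    transitivity (Cmult (RtoC 6) (Cmult (RtoC (/24)) (Cmult (Cmult (Cmult w w) w)
        (RtoC (/ IZR k1 * / IZR k2 * / IZR k3 + / IZR k1 * / IZR k2 * / IZR k4 +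
                / IZR k1 * / IZR k3 * / IZR k4 + / IZR k2 * / IZR k3 * / IZR k4))))).
    - apply C_eq; simpl; ring.
    - rewrite S. apply C_eq; simpl; ring. }
  all: assert (M : (k1 mod 4 = 0 /\ k2 mod 4 = 0 /\ k3 mod 4 = 0 /\ k4 mod 4 = 0)%Z).
  all: try (subst; change (0 mod 4)%Z with 0%Z in *; repeat split; congruence).
  all: destruct M as (M1 & M2 & M3 & M4).
  all: rewrite (E1_zero_case k1 M1), (E1_zero_case k2 M2), (E1_zero_case k3 M3), (E1_zero_case k4 M4).
  all: unfold delta.
  all: destruct (Z.eqb_spec k1 0), (Z.eqb_spec k2 0), (Z.eqb_spec k3 0), (Z.eqb_spec k4 0);
       try (exfalso; lia); simpl; apply C_eq; simpl; field.
Qed.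

Definition G6 (F : Z -> Z -> Z -> C) (a b c : Z) : C :=
  Cplus (Cplus (Cplus (F a b c) (F a c b)) (Cplus (F b a c) (F b c a))) (Cplus (F c a b) (F c b a)).

Lemma group24 F k1 k2 k3 k4 :
  sumC (map (app3 F) (trip24 k1 k2 k3 k4)) =
  Cplus (Cplus (Cplus (G6 F k1 k2 k3) (G6 F k1 k2 k4)) (G6 F k1 k3 k4)) (G6 F k2 k3 k4).
Proof. unfold sumC, G6, trip24. simpl. ring. Qed.

Lemma TI_sumC {A : Type} (l : list A) (F : A -> R -> R -> R -> C) (V : A -> C) :
  (forall a, In a l -> TI (F a) (V a)) ->
  TI (fun x1 x2 x3 => sumC (map (fun a => F a x1 x2 x3) l)) (sumC (map V l)).
Proof.
  induction l as [|a l IH]; intros H; simpl.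
  - apply TI_zero.
  - apply (TI_plus (F a) (fun x1 x2 x3 => sumC (map (fun a => F a x1 x2 x3) l))).
    + apply H; left; auto.
    + apply IH. intros; apply H; right; auto.
Qed.

Lemma cont_main k1 k2 k3 k4 : inH (k1,k2,k3,k4) ->
  exists V, TI (fun x1 x2 x3 => TC (k1,k2,k3,k4) (tx x1 x2 x3)) V /\
            Cmult (RtoC 6) V = delta (k1,k2,k3,k4).
Proof.
  intros Hk. pose proof Hk as (hs & _).
  eexists. split.
  - eapply TI_ext. { intros x1 x2 x3. symmetry. apply TC_expand. exact hs. }
    apply TI_scal.
    apply (TI_ext (fun x1 x2 x3 => sumC (map (fun t => app3 (fun a b c => P3 a b c x1 x2 x3) t)
                                      (trip24 k1 k2 k3 k4)))).
    { intros. reflexivity. }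
    apply (TI_sumC _ (fun t x1 x2 x3 => app3 (fun a b c => P3 a b c x1 x2 x3) t)
                     (app3 (fun a b c => J3 (e a) (e b) (e c)))).
    intros [[a b] c] _. simpl. apply TI_prod; apply e_Dif.
  - rewrite group24. unfold G6.
    rewrite !cube3 by apply e_Dif.
    apply cont_alg; auto.
Qed.

Lemma sumC_app l1 l2 : sumC (l1 ++ l2) = Cplus (sumC l1) (sumC l2).
Proof. induction l1; simpl. - apply C_eq; simpl; ring. - rewrite IHl1. apply C_eq; simpl; ring. Qed.

Lemma sumC_map_plus {A} (l : list A) f g :
  sumC (map (fun x => Cplus (f x) (g x)) l) = Cplus (sumC (map f l)) (sumC (map g l)).
Proof. induction l; simpl. - apply C_eq; simpl; ring. - rewrite IHl. apply C_eq; simpl; ring. Qed.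

Lemma sumC_map_scal {A} (l : list A) c f :
  sumC (map (fun x => Cmult c (f x)) l) = Cmult c (sumC (map f l)).
Proof. induction l; simpl. - apply C_eq; simpl; ring. - rewrite IHl. apply C_eq; simpl; ring. Qed.

Lemma sumC_map_scal_r {A} (l : list A) c f :
  sumC (map (fun x => Cmult (f x) c) l) = Cmult (sumC (map f l)) c.
Proof. induction l; simpl. - apply C_eq; simpl; ring. - rewrite IHl. apply C_eq; simpl; ring. Qed.

Lemma sumC_map_zero {A} (l : list A) : sumC (map (fun _ => RtoC 0) l) = RtoC 0.
Proof. induction l; simpl; auto. rewrite IHl. apply C_eq; simpl; ring. Qed.

Lemma sumC_map_ext {A} (l : list A) f g :
  (forall x, In x l -> f x = g x) -> sumC (map f l) = sumC (map g l).
Proof. intros H. f_equal. apply map_ext_in. auto. Qed.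

Lemma sumC_flat_map {A B} (l : list A) (f : A -> list B) (g : B -> C) :
  sumC (map g (flat_map f l)) = sumC (map (fun x => sumC (map g (f x))) l).
Proof. induction l; simpl; auto. rewrite map_app, sumC_app, IHl. reflexivity. Qed.

Lemma sumC_swap {A B} (l1 : list A) (l2 : list B) (g : A -> B -> C) :
  sumC (map (fun x => sumC (map (fun y => g x y) l2)) l1) =
  sumC (map (fun y => sumC (map (fun x => g x y) l1)) l2).
Proof.
  induction l1 as [|a l1 IH]; simpl.
  - symmetry. apply sumC_map_zero.
  - rewrite IH. rewrite <- sumC_map_plus. reflexivity.
Qed.

Lemma sumC_flat_map' {A} (l : list A) (f : A -> list C) :
  sumC (flat_map f l) = sumC (map (fun x => sumC (f x)) l).
Proof. induction l; simpl; auto. rewrite sumC_app, IHl. reflexivity. Qed.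

Definition S3 (n : nat) (F : nat -> nat -> nat -> C) : C :=
  sumC (map (fun a1 => sumC (map (fun a2 => sumC (map (fun a3 => F a1 a2 a3)
     (seq 0 (S a2)))) (seq 0 (S a1)))) (seq 0 (S n))).

Lemma cub_S3 n F : cubature_sum n F = S3 n F.
Proof.
  unfold cubature_sum, S3. change (fold_right Cplus (RtoC 0)) with sumC.
  rewrite sumC_flat_map'.
  apply sumC_map_ext; intros a1 _. rewrite sumC_flat_map'. reflexivity.
Qed.

Lemma S3_plus n F G : S3 n (fun a b c => Cplus (F a b c) (G a b c)) = Cplus (S3 n F) (S3 n G).
Proof.
  unfold S3. rewrite <- sumC_map_plus. apply sumC_map_ext; intros.
  rewrite <- sumC_map_plus. apply sumC_map_ext; intros.
  rewrite <- sumC_map_plus. reflexivity.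
Qed.

Lemma S3_scal n c F : S3 n (fun a b d => Cmult c (F a b d)) = Cmult c (S3 n F).
Proof.
  unfold S3. rewrite <- sumC_map_scal. apply sumC_map_ext; intros.
  rewrite <- sumC_map_scal. apply sumC_map_ext; intros.
  rewrite <- sumC_map_scal. reflexivity.
Qed.

Lemma S3_zero n : S3 n (fun _ _ _ => RtoC 0) = RtoC 0.
Proof.
  unfold S3. rewrite (sumC_map_ext _ _ (fun _ => RtoC 0)). apply sumC_map_zero.
  intros a _. rewrite (sumC_map_ext _ _ (fun _ => RtoC 0)). apply sumC_map_zero.
  intros b _. apply sumC_map_zero.
Qed.

Lemma S3_ext n F G : (forall a b c, (c <= b <= a)%nat -> (a <= n)%nat -> F a b c = G a b c) -> S3 n F = S3 n G.
Proof.
  intros H. unfold S3. apply sumC_map_ext; intros a Ha. apply in_seq in Ha.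
  apply sumC_map_ext; intros b Hb. apply in_seq in Hb.
  apply sumC_map_ext; intros c Hc. apply in_seq in Hc. apply H; lia.
Qed.

Lemma S3_sumC {A} n (l : list A) (G : A -> nat -> nat -> nat -> C) :
  S3 n (fun a b c => sumC (map (fun t => G t a b c) l)) = sumC (map (fun t => S3 n (G t)) l).
Proof.
  induction l as [|t l IH]; simpl.
  - apply S3_zero.
  - rewrite S3_plus, IH. reflexivity.
Qed.

Definition Box (n : nat) (h : nat -> nat -> nat -> C) : C :=
  sumC (map (fun a => sumC (map (fun b => sumC (map (fun c => h a b c)
     (seq 0 (S n)))) (seq 0 (S n)))) (seq 0 (S n))).

Lemma Box_ext n h g : (forall a b c, (a <= n)%nat -> (b <= n)%nat -> (c <= n)%nat -> h a b c = g a b c) ->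
  Box n h = Box n g.
Proof.
  intros H. unfold Box. apply sumC_map_ext; intros a Ha. apply in_seq in Ha.
  apply sumC_map_ext; intros b Hb. apply in_seq in Hb.
  apply sumC_map_ext; intros c Hc. apply in_seq in Hc. apply H; lia.
Qed.

Lemma Box_12 n h : Box n h = Box n (fun x y z => h y x z).
Proof. unfold Box. apply sumC_swap. Qed.

Lemma Box_23 n h : Box n h = Box n (fun x y z => h x z y).
Proof. unfold Box. apply sumC_map_ext; intros. apply sumC_swap. Qed.

Lemma Box_plus n F G : Box n (fun a b c => Cplus (F a b c) (G a b c)) = Cplus (Box n F) (Box n G).
Proof.
  unfold Box. rewrite <- sumC_map_plus. apply sumC_map_ext; intros.
  rewrite <- sumC_map_plus. apply sumC_map_ext; intros.
  rewrite <- sumC_map_plus. reflexivity.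
Qed.

Lemma sumC_trunc m n (f : nat -> C) : (m <= n)%nat ->
  sumC (map f (seq 0 (S m))) = sumC (map (fun x => if Nat.leb x m then f x else RtoC 0) (seq 0 (S n))).
Proof.
  intros H. replace (S n) with (S m + (n - m))%nat by lia. rewrite seq_app, !map_app, !sumC_app.
  transitivity (Cplus (sumC (map f (seq 0 (S m)))) (RtoC 0)). { apply C_eq; simpl; ring. }
  f_equal.
  - apply sumC_map_ext. intros x Hx. apply in_seq in Hx. destruct (Nat.leb_spec x m); [reflexivity|lia].
  - rewrite (sumC_map_ext _ _ (fun _ => RtoC 0)). symmetry; apply sumC_map_zero.
    intros x Hx. apply in_seq in Hx. destruct (Nat.leb_spec x m); [lia|reflexivity].
Qed.

Lemma sumC_if {A} (l : list A) (b : bool) f :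
  (if b then sumC (map f l) else RtoC 0) = sumC (map (fun x => if b then f x else RtoC 0) l).
Proof. destruct b; auto. symmetry; apply sumC_map_zero. Qed.

Definition Ilam (n x y z : nat) : R :=
  if (Nat.leb y x && Nat.leb z y)%bool then lambda n x y z else 0.

Lemma S3_Box n X :
  S3 n (fun a b c => Cmult (RtoC (lambda n a b c)) (X a b c)) =
  Box n (fun a b c => Cmult (RtoC (Ilam n a b c)) (X a b c)).
Proof.
  unfold S3, Box. apply sumC_map_ext; intros a Ha. apply in_seq in Ha.
  rewrite (sumC_trunc a n) by lia.
  apply sumC_map_ext; intros b Hb. apply in_seq in Hb.
  rewrite sumC_if.
  destruct (Nat.leb_spec b a).
  - rewrite (sumC_trunc b n) by lia.
    apply sumC_map_ext; intros c Hc. apply in_seq in Hc.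
    unfold Ilam. destruct (Nat.leb_spec b a); [|lia]. destruct (Nat.leb_spec c b); simpl.
    + reflexivity.
    + apply C_eq; simpl; ring.
  - transitivity (RtoC 0).
    + erewrite sumC_map_ext; [apply sumC_map_zero|]. intros; reflexivity.
    + symmetry. erewrite sumC_map_ext; [apply sumC_map_zero|].
      intros c _. unfold Ilam. destruct (Nat.leb_spec b a); [lia|]. simpl. apply C_eq; simpl; ring.
Qed.

Definition W (n x y z : nat) : R :=
  Ilam n x y z + Ilam n x z y + Ilam n y x z + Ilam n y z x + Ilam n z x y + Ilam n z y x.

Definition Lc (g : nat -> nat -> nat -> R) n a b c := g a b c + (if Nat.eqb c 0 then g a b n else 0).
Definition Lb (g : nat -> nat -> nat -> R) n a b c := g a b c + (if Nat.eqb b 0 then g a n c else 0).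
Definition La (g : nat -> nat -> nat -> R) n a b c := g a b c + (if Nat.eqb a 0 then g n b c else 0).

Ltac crush :=
  repeat match goal with
  | |- context [Nat.eqb ?x ?y] => destruct (Nat.eqb_spec x y); try (exfalso; lia)
  | |- context [Nat.leb ?x ?y] => destruct (Nat.leb_spec x y); try (exfalso; lia)
  end.

Lemma Wsum_nz n a b c : (1 <= n)%nat -> (0 < a < n)%nat -> (0 < b < n)%nat -> (0 < c < n)%nat ->
  W n a b c = 24.
Proof.
  intros. unfold W, Ilam, lambda. crush; simpl; lra.
Qed.

Lemma Wsum n a b c : (1 <= n)%nat -> (a < n)%nat -> (b < n)%nat -> (c < n)%nat ->
  La (Lb (Lc (W n) n) n) n a b c = 24.
Proof.
  intros. unfold La, Lb, Lc, W, Ilam, lambda. crush; simpl; lra.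
Qed.


Definition Box' (n : nat) (h : nat -> nat -> nat -> C) : C :=
  sumC (map (fun a => sumC (map (fun b => sumC (map (fun c => h a b c)
     (seq 0 n))) (seq 0 n))) (seq 0 n)).

Lemma sumC_fold n (h : nat -> C) : (1 <= n)%nat ->
  sumC (map h (seq 0 (S n))) =
  sumC (map (fun b => Cplus (h b) (if Nat.eqb b 0 then h n else RtoC 0)) (seq 0 n)).
Proof.
  intros Hn. rewrite sumC_map_plus. rewrite seq_S, map_app, sumC_app. simpl (map h (n :: nil)).
  f_equal. destruct n as [|n]; [lia|]. simpl. rewrite (sumC_map_ext _ _ (fun _ => RtoC 0)).
  - rewrite sumC_map_zero. apply C_eq; simpl; ring.
  - intros x Hx. apply in_seq in Hx. destruct (Nat.eqb_spec x 0); [lia|reflexivity].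
Qed.

Definition LcC (h : nat -> nat -> nat -> C) n a b c := Cplus (h a b c) (if Nat.eqb c 0 then h a b n else RtoC 0).
Definition LbC (h : nat -> nat -> nat -> C) n a b c := Cplus (h a b c) (if Nat.eqb b 0 then h a n c else RtoC 0).
Definition LaC (h : nat -> nat -> nat -> C) n a b c := Cplus (h a b c) (if Nat.eqb a 0 then h n b c else RtoC 0).

Lemma Box_fold n h : (1 <= n)%nat -> Box n h = Box' n (LaC (LbC (LcC h n) n) n).
Proof.
  intros Hn. unfold Box, Box'.
  transitivity (sumC (map (fun a => sumC (map (fun b => sumC (map (fun c => LcC h n a b c)
     (seq 0 n))) (seq 0 (S n)))) (seq 0 (S n)))).
  { apply sumC_map_ext; intros; apply sumC_map_ext; intros. apply sumC_fold; auto. }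
  transitivity (sumC (map (fun a => sumC (map (fun b => sumC (map (fun c => LbC (LcC h n) n a b c)
     (seq 0 n))) (seq 0 n))) (seq 0 (S n)))).
  { apply sumC_map_ext; intros. rewrite sumC_fold by auto. apply sumC_map_ext; intros.
    rewrite sumC_if, <- sumC_map_plus. reflexivity. }
  rewrite sumC_fold by auto. apply sumC_map_ext; intros.
  rewrite sumC_if, <- sumC_map_plus. apply sumC_map_ext; intros.
  rewrite sumC_if, <- sumC_map_plus. reflexivity.
Qed.

Definition D3 (n : nat) (p q r : nat -> C) : C :=
  S3 n (fun a b c => Cmult (RtoC (lambda n a b c)) (Cmult (Cmult (p a) (q b)) (r c))).

Definition Ssum (n : nat) (u : nat -> C) : C := sumC (map u (seq 0 n)).

Lemma disc_cube n u v w : (1 <= n)%nat -> u n = u 0%nat -> v n = v 0%nat -> w n = w 0%nat ->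
  Cplus (Cplus (Cplus (D3 n u v w) (D3 n u w v)) (Cplus (D3 n v u w) (D3 n v w u)))
        (Cplus (D3 n w u v) (D3 n w v u))
  = Cmult (RtoC 24) (Cmult (Cmult (Ssum n u) (Ssum n v)) (Ssum n w)).
Proof.
  intros Hn Hu Hv Hw. unfold D3. rewrite !S3_Box.
  set (X := fun a b c => Cmult (Cmult (u a) (v b)) (w c)).
  assert (E2 : Box n (fun a b c => Cmult (RtoC (Ilam n a b c)) (Cmult (Cmult (u a) (w b)) (v c))) =
               Box n (fun a b c => Cmult (RtoC (Ilam n a c b)) (X a b c))).
  { rewrite (Box_23 n). apply Box_ext; intros; unfold X; apply C_eq; simpl; ring. }
  assert (E3 : Box n (fun a b c => Cmult (RtoC (Ilam n a b c)) (Cmult (Cmult (v a) (u b)) (w c))) =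
               Box n (fun a b c => Cmult (RtoC (Ilam n b a c)) (X a b c))).
  { rewrite (Box_12 n). apply Box_ext; intros; unfold X; apply C_eq; simpl; ring. }
  assert (E4 : Box n (fun a b c => Cmult (RtoC (Ilam n a b c)) (Cmult (Cmult (v a) (w b)) (u c))) =
               Box n (fun a b c => Cmult (RtoC (Ilam n b c a)) (X a b c))).
  { rewrite (Box_23 n), (Box_12 n). apply Box_ext; intros; unfold X; apply C_eq; simpl; ring. }
  assert (E5 : Box n (fun a b c => Cmult (RtoC (Ilam n a b c)) (Cmult (Cmult (w a) (u b)) (v c))) =
               Box n (fun a b c => Cmult (RtoC (Ilam n c a b)) (X a b c))).
  { rewrite (Box_12 n), (Box_23 n). apply Box_ext; intros; unfold X; apply C_eq; simpl; ring. }
  assert (E6 : Box n (fun a b c => Cmult (RtoC (Ilam n a b c)) (Cmult (Cmult (w a) (v b)) (u c))) =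
               Box n (fun a b c => Cmult (RtoC (Ilam n c b a)) (X a b c))).
  { rewrite (Box_12 n), (Box_23 n), (Box_12 n). apply Box_ext; intros; unfold X; apply C_eq; simpl; ring. }
  rewrite E2, E3, E4, E5, E6. rewrite <- !Box_plus.
  transitivity (Box n (fun a b c => Cmult (RtoC (W n a b c)) (X a b c))).
  { apply Box_ext; intros. unfold W. apply C_eq; simpl; ring. }
  rewrite Box_fold by auto.
  transitivity (Box' n (fun a b c => Cmult (RtoC 24) (X a b c))).
  { unfold Box'. apply sumC_map_ext; intros a Ha; apply in_seq in Ha.
    apply sumC_map_ext; intros b Hb; apply in_seq in Hb.
    apply sumC_map_ext; intros c Hc; apply in_seq in Hc.
    rewrite <- (Wsum n a b c) by lia.
    unfold LaC, LbC, LcC, La, Lb, Lc, X.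
    destruct (Nat.eqb_spec a 0), (Nat.eqb_spec b 0), (Nat.eqb_spec c 0); subst;
      rewrite ?Hu, ?Hv, ?Hw; apply C_eq; simpl; ring. }
  unfold Box', Ssum, X.
  transitivity (sumC (map (fun a => Cmult (Cmult (RtoC 24) (u a))
     (sumC (map (fun b => Cmult (v b) (sumC (map w (seq 0 n)))) (seq 0 n)))) (seq 0 n))).
  { apply sumC_map_ext; intros a _. rewrite <- sumC_map_scal. apply sumC_map_ext; intros b _.
    transitivity (sumC (map (fun c => Cmult (Cmult (Cmult (RtoC 24) (u a)) (v b)) (w c)) (seq 0 n))).
    { apply sumC_map_ext; intros; apply C_eq; simpl; ring. }
    rewrite sumC_map_scal. apply C_eq; simpl; ring. }
  rewrite (sumC_map_ext _ _ (fun a => Cmult (u a) (Cmult (RtoC 24) (sumC (map (fun b => Cmult (v b) (sumC (map w (seq 0 n)))) (seq 0 n)))))).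
  2:{ intros; apply C_eq; simpl; ring. }
  rewrite sumC_map_scal_r. rewrite (sumC_map_scal_r (seq 0 n) (sumC (map w (seq 0 n))) v).
  apply C_eq; simpl; ring.
Qed.

Definition en (n : nat) (m : Z) (j : nat) : C := e m (INR j / INR n).

Lemma cexpi_INR j th : cexpi (INR j * th) = Cpow (cexpi th) j.
Proof.
  induction j as [|j IH].
  - simpl. rewrite Rmult_0_l. apply cexpi_0.
  - rewrite S_INR. replace ((INR j + 1) * th) with (th + INR j * th) by ring.
    rewrite cexpi_add, IH. reflexivity.
Qed.

Lemma geom (z : C) n : Cmult (Cminus z (RtoC 1)) (sumC (map (fun j => Cpow z j) (seq 0 n))) =
  Cminus (Cpow z n) (RtoC 1).
Proof.
  induction n as [|n IH].
  - simpl. apply C_eq; simpl; ring.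
  - rewrite seq_S, map_app, sumC_app. simpl (sumC (map _ (n :: nil))).
    transitivity (Cplus (Cmult (Cminus z (RtoC 1)) (sumC (map (fun j => Cpow z j) (seq 0 n))))
                        (Cmult (Cminus z (RtoC 1)) (Cplus (Cpow z n) (RtoC 0)))).
    { apply C_eq; simpl; ring. }
    rewrite IH. simpl Cpow. apply C_eq; simpl; ring.
Qed.

Lemma cexpi_eq1 th : cexpi th = RtoC 1 -> exists q : Z, th = 2 * PI * IZR q.
Proof.
  intros H. unfold cexpi in H. injection H. intros Hs Hc.
  destruct (sin_eq_0_0 th Hs) as [k Hk].
  destruct (Zeven_odd_dec k) as [He|Ho].
  - apply Zeven_ex in He. destruct He as [q Hq]. exists q. rewrite Hk, Hq, mult_IZR. simpl. ring.
  - apply Zodd_ex in Ho. destruct Ho as [q Hq]. exfalso.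
    assert (cexpi th = cexpi (PI + 2 * PI * IZR q)).
    { f_equal. rewrite Hk, Hq, plus_IZR, mult_IZR. simpl. ring. }
    rewrite cexpi_add, cexpi_2piZ in H0. unfold cexpi in H0. rewrite cos_PI, sin_PI in H0.
    rewrite H in H0. injection H0. intros. lra.
Qed.

Lemma Cpow_one j : Cpow (RtoC 1) j = RtoC 1.
Proof. induction j; simpl; auto. rewrite IHj. apply C_eq; simpl; ring. Qed.

Lemma sum_ones n : forall s, sumC (map (fun j => Cpow (RtoC 1) j) (seq s n)) = RtoC (INR n).
Proof.
  induction n as [|n IH]; intros s; [reflexivity|].
  change (sumC (map (fun j => Cpow (RtoC 1) j) (seq s (S n)))) with
    (Cplus (Cpow (RtoC 1) s) (sumC (map (fun j => Cpow (RtoC 1) j) (seq (S s) n)))).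
  rewrite IH, Cpow_one, S_INR. apply C_eq; simpl; ring.
Qed.

Lemma ssum_cases n m : (1 <= n)%nat -> (m mod 4 = 0)%Z ->
  (Ssum n (en n m) = RtoC (INR n) /\ exists q, m = (4 * Z.of_nat n * q)%Z) \/
  (Ssum n (en n m) = RtoC 0 /\ m <> 0%Z).
Proof.
  intros Hn Hm.
  assert (HnR : INR n <> 0) by (apply not_0_INR; lia).
  set (z := cexpi (PI / 2 * IZR m * / INR n)).
  assert (Hpow : forall j, en n m j = Cpow z j).
  { intros j. unfold en, e, z. rewrite <- cexpi_INR. f_equal. field. auto. }
  assert (Hzn : Cpow z n = RtoC 1).
  { rewrite <- Hpow. unfold en, e. replace (PI / 2 * IZR m * (INR n / INR n)) with (PI / 2 * IZR m) by (field; auto).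
    rewrite (cexpi_mod4 m 0) by (rewrite Hm; reflexivity). rewrite Rmult_0_r. apply cexpi_0. }
  unfold Ssum. rewrite (sumC_map_ext _ _ (fun j => Cpow z j)) by (intros; apply Hpow).
  pose proof (geom z n) as G. rewrite Hzn in G.
  destruct (Req_dec (fst z) 1) as [H1|H1]; [destruct (Req_dec (snd z) 0) as [H2|H2]|].
  -
    assert (Ez : z = RtoC 1) by (destruct z; simpl in *; subst; reflexivity).
    left. split.
    + rewrite Ez. apply sum_ones.
    + destruct (cexpi_eq1 _ Ez) as [q Hq]. exists q. apply eq_IZR.
      rewrite !mult_IZR, <- INR_IZR_INZ.
      assert (PI <> 0) by (pose proof PI_RGT_0; lra).
      apply (f_equal (fun t => t * INR n * 2 / PI)) in Hq.
      replace (PI / 2 * IZR m * / INR n * INR n * 2 / PI) with (IZR m) in Hq by (field; auto).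
      rewrite Hq. simpl. field. auto.
  - right. assert (Hz1 : Cminus z (RtoC 1) <> RtoC 0).
    { intros Hc. apply (f_equal snd) in Hc. simpl in Hc. apply H2. unfold z; simpl. lra. }
    split.
    + replace (Cminus (RtoC 1) (RtoC 1)) with (RtoC 0) in G by (apply C_eq; simpl; ring).
      apply (f_equal (Cmult (Cinv (Cminus z (RtoC 1))))) in G.
      rewrite Cmult_assoc, Cinv_l, Cmult_0_r, Cmult_1_l in G by auto. exact G.
    + intros ->. apply H2. unfold z. rewrite Rmult_0_r, Rmult_0_l. simpl. apply sin_0.
  - right. assert (Hz1 : Cminus z (RtoC 1) <> RtoC 0).
    { intros Hc. apply (f_equal fst) in Hc. simpl in Hc. apply H1. unfold z; simpl. lra. }
    split.
    + replace (Cminus (RtoC 1) (RtoC 1)) with (RtoC 0) in G by (apply C_eq; simpl; ring).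
      apply (f_equal (Cmult (Cinv (Cminus z (RtoC 1))))) in G.
      rewrite Cmult_assoc, Cinv_l, Cmult_0_r, Cmult_1_l in G by auto. exact G.
    + intros ->. apply H1. unfold z. rewrite Rmult_0_r, Rmult_0_l. simpl. apply cos_0.
Qed.

Lemma disc_expand n k1 k2 k3 k4 : (k1 + k2 + k3 + k4 = 0)%Z ->
  S3 n (fun a b c => Cmult (RtoC (lambda n a b c))
     (TC (k1,k2,k3,k4) (tx (INR a / INR n) (INR b / INR n) (INR c / INR n))))
  = Cmult (RtoC (/24)) (sumC (map (app3 (fun x y z => D3 n (en n x) (en n y) (en n z)))
                                  (trip24 k1 k2 k3 k4))).
Proof.
  intros hs.
  rewrite (S3_ext n _ (fun a b c => Cmult (RtoC (/24)) (sumC (map (fun t =>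
     Cmult (RtoC (lambda n a b c)) (app3 (fun x y z => P3 x y z (INR a / INR n) (INR b / INR n) (INR c / INR n)) t))
     (trip24 k1 k2 k3 k4))))).
  2:{ intros a b c _ _. rewrite TC_expand by auto. rewrite sumC_map_scal.
      apply C_eq; simpl; ring. }
  rewrite S3_scal. f_equal. rewrite S3_sumC. apply sumC_map_ext.
  intros [[x y] z] _. reflexivity.
Qed.

Lemma div4_zero n k1 k2 k3 k4 q1 q2 q3 q4 : (1 <= n)%nat ->
  TC_index (2 * Z.of_nat n - 1) (k1,k2,k3,k4) ->
  k1 = (4 * Z.of_nat n * q1)%Z -> k2 = (4 * Z.of_nat n * q2)%Z ->
  k3 = (4 * Z.of_nat n * q3)%Z -> k4 = (4 * Z.of_nat n * q4)%Z ->
  k1 = 0%Z /\ k2 = 0%Z /\ k3 = 0%Z /\ k4 = 0%Z.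
Proof.
  intros Hn ((hs & _) & b1 & b2 & b3 & b4) -> -> -> ->.
  set (N := Z.of_nat n) in *. assert (HN : (1 <= N)%Z) by lia.
  assert (q4 <= q3)%Z by nia. assert (q3 <= q2)%Z by nia. assert (q2 <= q1)%Z by nia.
  assert (q1 <= q4 + 1)%Z by nia.
  assert (q1 + q2 + q3 + q4 = 0)%Z by nia.
  assert (q1 = 0 /\ q2 = 0 /\ q3 = 0 /\ q4 = 0)%Z as (-> & -> & -> & ->) by lia.
  lia.
Qed.

Lemma en_period n m : (1 <= n)%nat -> (m mod 4 = 0)%Z -> en n m n = en n m 0%nat.
Proof.
  intros Hn Hm. unfold en, e. rewrite Rdiv_diag by (apply not_0_INR; lia).
  simpl (INR 0). rewrite Rdiv_0_l, !Rmult_0_r, Rmult_1_r.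
  rewrite (cexpi_mod4 m 0) by (rewrite Hm; reflexivity). rewrite Rmult_0_r. reflexivity.
Qed.

Lemma disc_r0 n k1 k2 k3 k4 : (1 <= n)%nat -> TC_index (2 * Z.of_nat n - 1) (k1,k2,k3,k4) ->
  (k1 mod 4 = 0)%Z ->
  Cmult (RtoC (/ (4 * INR n ^ 3))) (S3 n (fun a b c => Cmult (RtoC (lambda n a b c))
     (TC (k1,k2,k3,k4) (tx (INR a / INR n) (INR b / INR n) (INR c / INR n))))) = delta (k1,k2,k3,k4).
Proof.
  intros Hn Hk Hm1. pose proof Hk as ((hs & h12 & h23 & h34) & _).
  assert (Hm2 : (k2 mod 4 = 0)%Z) by congruence.
  assert (Hm3 : (k3 mod 4 = 0)%Z) by congruence.
  assert (Hm4 : (k4 mod 4 = 0)%Z) by congruence.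
  rewrite disc_expand by auto. rewrite group24. unfold G6.
  rewrite !disc_cube by (auto; apply en_period; auto).
  assert (HnR : INR n <> 0) by (apply not_0_INR; lia).
  destruct (ssum_cases n k1 Hn Hm1) as [[S1 [q1 D1]]|[S1 N1]];
  destruct (ssum_cases n k2 Hn Hm2) as [[S2 [q2 D2]]|[S2 N2]];
  destruct (ssum_cases n k3 Hn Hm3) as [[S3' [q3 D3']]|[S3' N3]];
  destruct (ssum_cases n k4 Hn Hm4) as [[S4' [q4 D4]]|[S4' N4]];
  rewrite S1, S2, S3', S4'; unfold delta.
  all: try (destruct (div4_zero n k1 k2 k3 k4 q1 q2 q3 q4 Hn Hk D1 D2 D3' D4) as (E1 & E2 & E3 & E4);
            rewrite E1, E2, E3, E4; simpl; apply C_eq; simpl; field; auto).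
  all: try (exfalso; first
     [ pose proof (div4_zero n k1 k2 k3 k4 q1 q2 q3 (-(q1+q2+q3))%Z Hn Hk D1 D2 D3' ltac:(lia)); lia
     | pose proof (div4_zero n k1 k2 k3 k4 q1 q2 (-(q1+q2+q4))%Z q4 Hn Hk D1 D2 ltac:(lia) D4); lia
     | pose proof (div4_zero n k1 k2 k3 k4 q1 (-(q1+q3+q4))%Z q3 q4 Hn Hk D1 ltac:(lia) D3' D4); lia
     | pose proof (div4_zero n k1 k2 k3 k4 (-(q2+q3+q4))%Z q2 q3 q4 Hn Hk ltac:(lia) D2 D3' D4); lia ]).
  all: destruct (Z.eqb_spec k1 0), (Z.eqb_spec k2 0), (Z.eqb_spec k3 0), (Z.eqb_spec k4 0);
       try lia; simpl; apply C_eq; simpl; ring.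
Qed.


Definition alc (n : nat) : list (nat * nat * nat) :=
  flat_map (fun a => flat_map (fun b => map (fun c => (a, b, c)) (seq 0 (S b))) (seq 0 (S a))) (seq 0 (S n)).

Definition F3 (F : nat -> nat -> nat -> C) (t : nat * nat * nat) : C :=
  match t with (a, b, c) => F a b c end.

Lemma S3_alc n F : S3 n F = sumC (map (F3 F) (alc n)).
Proof.
  unfold S3, alc. rewrite sumC_flat_map. apply sumC_map_ext; intros a _.
  rewrite sumC_flat_map. apply sumC_map_ext; intros b _. rewrite map_map. reflexivity.
Qed.

Lemma in_alc n a b c : In (a, b, c) (alc n) <-> (c <= b <= a /\ a <= n)%nat.
Proof.
  unfold alc. rewrite in_flat_map. split.
  - intros (a' & Ha' & H). rewrite in_flat_map in H. destruct H as (b' & Hb' & H).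
    rewrite in_map_iff in H. destruct H as (c' & E & Hc'). injection E; intros; subst.
    apply in_seq in Ha'. apply in_seq in Hb'. apply in_seq in Hc'. lia.
  - intros H. exists a. split; [apply in_seq; lia|]. rewrite in_flat_map. exists b.
    split; [apply in_seq; lia|]. rewrite in_map_iff. exists c. split; [reflexivity|apply in_seq; lia].
Qed.

Lemma NoDup_flat_map_inj {A B} (f : A -> list B) (l : list A) :
  NoDup l -> (forall x, In x l -> NoDup (f x)) ->
  (forall x y z, In x l -> In y l -> In z (f x) -> In z (f y) -> x = y) ->
  NoDup (flat_map f l).
Proof.
  induction l as [|a l IH]; intros Hl Hf Hd; simpl; [constructor|].
  inversion Hl; subst. apply NoDup_app.
  - apply Hf; left; auto.
  - apply IH; auto. intros; apply Hf; right; auto. intros; eapply Hd; eauto; right; auto.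
  - intros z Hz Hz'. apply in_flat_map in Hz'. destruct Hz' as (y & Hy & Hzy).
    assert (a = y) by (eapply Hd; eauto; [left|right]; auto). subst. contradiction.
Qed.

Lemma NoDup_alc n : NoDup (alc n).
Proof.
  unfold alc. apply NoDup_flat_map_inj.
  - apply seq_NoDup.
  - intros a _. apply NoDup_flat_map_inj.
    + apply seq_NoDup.
    + intros b _. apply NoDup_map_NoDup_ForallPairs; [|apply seq_NoDup].
      intros x y _ _ E. injection E; auto.
    + intros x y z _ _ Hx Hy. apply in_map_iff in Hx, Hy.
      destruct Hx as (c & <- & _), Hy as (c' & E & _). injection E; auto.
  - intros x y z _ _ Hx Hy. apply in_flat_map in Hx, Hy.
    destruct Hx as (b & _ & Hx), Hy as (b' & _ & Hy). apply in_map_iff in Hx, Hy.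
    destruct Hx as (c & <- & _), Hy as (c' & E & _). injection E; auto.
Qed.

Definition gam (n : nat) (t : nat * nat * nat) : nat * nat * nat :=
  match t with (a, b, c) => ((n - c)%nat, (a - c)%nat, (b - c)%nat) end.

Lemma gam_perm n : Permutation (map (gam n) (alc n)) (alc n).
Proof.
  apply NoDup_Permutation.
  - apply NoDup_map_NoDup_ForallPairs; [|apply NoDup_alc].
    intros [[a b] c] [[a' b'] c'] H H' E. apply in_alc in H, H'. simpl in E.
    injection E; intros. f_equal; [f_equal|]; lia.
  - apply NoDup_alc.
  - intros [[a b] c]. rewrite in_map_iff. split.
    + intros ([[a' b'] c'] & E & H). apply in_alc in H. simpl in E. injection E; intros; subst.
      apply in_alc. lia.
    + intros H. apply in_alc in H. exists ((b + n - a)%nat, (c + n - a)%nat, (n - a)%nat).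
      split; [simpl; f_equal; [f_equal|]; lia|]. apply in_alc; lia.
Qed.

Lemma sumC_perm l l' : Permutation l l' -> sumC l = sumC l'.
Proof.
  induction 1; simpl; auto.
  - rewrite IHPermutation; auto.
  - unfold sumC; simpl. apply C_eq; simpl; ring.
  - congruence.
Qed.



Lemma lambda_gam n a b c : (c <= b <= a /\ a <= n)%nat ->
  lambda n (n - c) (a - c) (b - c) = lambda n a b c.
Proof. intros. unfold lambda. crush; reflexivity. Qed.

Lemma P3_single a b c y1 y2 y3 :
  P3 a b c y1 y2 y3 = cexpi (PI/2*IZR a*y1 + PI/2*IZR b*y2 + PI/2*IZR c*y3).
Proof. symmetry. apply P3_eq. reflexivity. Qed.

Lemma Pshift r a b c d x1 x2 x3 : (a + b + c + d = 0)%Z -> (a mod 4 = r mod 4)%Z ->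
  P3 a b c (1 - x3) (x1 - x3) (x2 - x3) = Cmult (cexpi (PI/2*IZR r)) (P3 b c d x1 x2 x3).
Proof.
  intros H Hr. rewrite !P3_single, <- (cexpi_mod4 a r Hr), <- cexpi_add. f_equal.
  assert (IZR d = - IZR a - IZR b - IZR c) as ->.
  { replace d with (-a-b-c)%Z by lia. rewrite !minus_IZR, opp_IZR. ring. }
  ring.
Qed.

Lemma TC_gam k1 k2 k3 k4 x1 x2 x3 : inH (k1,k2,k3,k4) ->
  TC (k1,k2,k3,k4) (tx (1 - x3) (x1 - x3) (x2 - x3)) =
  Cmult (cexpi (PI/2*IZR k1)) (TC (k1,k2,k3,k4) (tx x1 x2 x3)).
Proof.
  intros (hs & h12 & h23 & h34).
  rewrite !TC_expand by auto. unfold sumC, trip24. simpl map. simpl fold_right. simpl app3.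
  repeat first [ rewrite (Pshift k1 _ _ _ k1) by (lia || congruence)
               | rewrite (Pshift k1 _ _ _ k2) by (lia || congruence)
               | rewrite (Pshift k1 _ _ _ k3) by (lia || congruence)
               | rewrite (Pshift k1 _ _ _ k4) by (lia || congruence) ].
  ring.
Qed.

Lemma disc_rnz n k1 k2 k3 k4 : (1 <= n)%nat -> inH (k1,k2,k3,k4) -> (k1 mod 4 <> 0)%Z ->
  Cmult (RtoC (/ (4 * INR n ^ 3))) (S3 n (fun a b c => Cmult (RtoC (lambda n a b c))
     (TC (k1,k2,k3,k4) (tx (INR a / INR n) (INR b / INR n) (INR c / INR n))))) = delta (k1,k2,k3,k4).
Proof.
  intros Hn Hk Hr.
  assert (HnR : INR n <> 0) by (apply not_0_INR; lia).
  set (F := fun a b c => Cmult (RtoC (lambda n a b c))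
     (TC (k1,k2,k3,k4) (tx (INR a / INR n) (INR b / INR n) (INR c / INR n)))).
  set (z := cexpi (PI/2*IZR k1)).
  assert (Hz : S3 n F = Cmult z (S3 n F)).
  { rewrite S3_alc.
    transitivity (sumC (map (F3 F) (map (gam n) (alc n)))).
    { apply sumC_perm. apply Permutation_map. symmetry; apply gam_perm. }
    rewrite map_map, <- sumC_map_scal. apply sumC_map_ext.
    intros [[a b] c] H. apply in_alc in H. simpl. unfold F.
    rewrite lambda_gam by auto.
    rewrite !minus_INR by lia.
    replace ((INR n - INR c) / INR n) with (1 - INR c / INR n) by (field; auto).
    replace ((INR a - INR c) / INR n) with (INR a / INR n - INR c / INR n) by (field; auto).
    replace ((INR b - INR c) / INR n) with (INR b / INR n - INR c / INR n) by (field; auto).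
    rewrite TC_gam by auto. fold z. ring. }
  assert (Hz1 : Cminus z (RtoC 1) <> RtoC 0).
  { intros E. assert (z = RtoC 1) as E'.
    { replace z with (Cplus (Cminus z (RtoC 1)) (RtoC 1)) by ring. rewrite E. ring. }
    destruct (cexpi_eq1 _ E') as [q Hq]. apply Hr.
    assert (k1 = 4 * q)%Z as ->.
    { apply eq_IZR. rewrite mult_IZR. assert (PI <> 0) by (pose proof PI_RGT_0; lra).
      apply (f_equal (fun t => t * 2 / PI)) in Hq.
      replace (PI / 2 * IZR k1 * 2 / PI) with (IZR k1) in Hq by (field; auto).
      rewrite Hq. simpl. field; auto. }
    rewrite Z.mul_comm, Z_mod_mult. reflexivity. }
  assert (H0 : S3 n F = RtoC 0).
  { assert (H1 : Cmult (Cminus z (RtoC 1)) (S3 n F) = RtoC 0).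
    { transitivity (Cminus (Cmult z (S3 n F)) (S3 n F)); [ring|]. rewrite <- Hz. ring. }
    apply (f_equal (Cmult (Cinv (Cminus z (RtoC 1))))) in H1.
    rewrite Cmult_assoc, Cinv_l, Cmult_0_r, Cmult_1_l in H1 by auto. exact H1. }
  rewrite H0, Cmult_0_r. unfold delta. destruct (Z.eqb_spec k1 0) as [->|]; [exfalso; apply Hr; reflexivity|].
  reflexivity.
Qed.

Definition Lfun (L : list (C * Z4)) (t : R4) : C :=
  fold_right (fun p acc => Cplus (Cmult (fst p) (TC (snd p) t)) acc) (RtoC 0) L.

Definition LD (L : list (C * Z4)) : C :=
  fold_right (fun p acc => Cplus (Cmult (fst p) (delta (snd p))) acc) (RtoC 0) L.

Lemma cont_L L : (forall p, In p L -> inH (snd p)) ->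
  exists V, TI (fun x1 x2 x3 => Lfun L (tx x1 x2 x3)) V /\ Cmult (RtoC 6) V = LD L.
Proof.
  induction L as [|[c k] L IH]; intros H.
  - exists (RtoC 0). split. apply TI_zero. simpl. apply C_eq; simpl; ring.
  - destruct IH as (V & HV & EV). { intros; apply H; right; auto. }
    destruct k as [[[k1 k2] k3] k4].
    destruct (cont_main k1 k2 k3 k4) as (U & HU & EU). { apply (H (c, (k1,k2,k3,k4))); left; auto. }
    exists (Cplus (Cmult c U) V). split.
    + apply (TI_plus (fun x1 x2 x3 => Cmult c (TC (k1,k2,k3,k4) (tx x1 x2 x3)))
                     (fun x1 x2 x3 => Lfun L (tx x1 x2 x3))); auto.
      apply TI_scal; auto.
    + unfold LD; cbn [fold_right fst snd]; fold (LD L). rewrite <- EV, <- EU. ring.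
Qed.

Lemma disc_k n k : (1 <= n)%nat -> TC_index (2 * Z.of_nat n - 1) k ->
  Cmult (RtoC (/ (4 * INR n ^ 3))) (S3 n (fun a b c => Cmult (RtoC (lambda n a b c))
     (TC k (tx (INR a / INR n) (INR b / INR n) (INR c / INR n))))) = delta k.
Proof.
  intros Hn Hk. destruct k as [[[k1 k2] k3] k4].
  destruct (Z.eq_dec (k1 mod 4) 0).
  - apply disc_r0; auto.
  - apply disc_rnz; auto. apply Hk.
Qed.

Lemma disc_L n L : (1 <= n)%nat -> (forall p, In p L -> TC_index (2 * Z.of_nat n - 1) (snd p)) ->
  Cmult (RtoC (/ (4 * INR n ^ 3))) (S3 n (fun a b c => Cmult (RtoC (lambda n a b c))
     (Lfun L (tx (INR a / INR n) (INR b / INR n) (INR c / INR n))))) = LD L.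
Proof.
  intros Hn. induction L as [|[c k] L IH]; intros H.
  - unfold LD, Lfun; cbn [fold_right]. rewrite (S3_ext n _ (fun _ _ _ => RtoC 0)). rewrite S3_zero. apply C_eq; simpl; ring.
    intros. apply C_eq; simpl; ring.
  - unfold LD; cbn [fold_right fst snd]; fold (LD L). rewrite (S3_ext n _ (fun a b d => Cplus
        (Cmult c (Cmult (RtoC (lambda n a b d)) (TC k (tx (INR a / INR n) (INR b / INR n) (INR d / INR n)))))
        (Cmult (RtoC (lambda n a b d)) (Lfun L (tx (INR a / INR n) (INR b / INR n) (INR d / INR n)))))).
    2:{ intros. unfold Lfun. cbn [fold_right fst snd]. ring. }
    rewrite S3_plus, S3_scal.
    rewrite <- (IH ltac:(intros; apply H; right; auto)).
    rewrite <- (disc_k n k Hn ltac:(apply (H (c,k)); left; auto)). ring.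
Qed.

Lemma in_triH_tx x1 x2 x3 : 0 <= x3 <= x2 -> x2 <= x1 <= 1 -> in_triH (tx x1 x2 x3).
Proof. intros. unfold in_triH, tx. repeat split; lra. Qed.

Theorem theorem4p9 (n : nat) (f : R -> R -> R -> C) :
  (1 <= n)%nat ->
  in_TC (2 * Z.of_nat n - 1)%Z
    (fun t : R4 => match t with (t1, t2, t3, t4) =>
                     f (t1 - t4) (t2 - t4) (t3 - t4) end) ->
  Cmult (RtoC 6) (int_simplex f) =
  Cmult (RtoC (/ (4 * INR n ^ 3)))
    (cubature_sum n (fun k1 k2 k3 =>
       Cmult (RtoC (lambda n k1 k2 k3))
             (f (INR k1 / INR n) (INR k2 / INR n) (INR k3 / INR n)))).
Proof.
  intros Hn (L & HF & Heq).
  assert (Hf : forall x1 x2 x3, 0 <= x3 <= x2 -> x2 <= x1 <= 1 -> f x1 x2 x3 = Lfun L (tx x1 x2 x3)).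
  { intros x1 x2 x3 H1 H2. pose proof (Heq _ (in_triH_tx x1 x2 x3 H1 H2)) as E.
    unfold Lfun. rewrite <- E. unfold tx. f_equal; field. }
  assert (HL : forall p, In p L -> TC_index (2 * Z.of_nat n - 1) (snd p)).
  { intros p Hp. rewrite Forall_forall in HF. apply HF; auto. }
  transitivity (LD L).
  - destruct (cont_L L) as (V & HV & EV).
    { intros p Hp. apply HL; auto. }
    rewrite <- EV. f_equal. rewrite <- (TI_int _ _ HV).
    unfold int_simplex. apply CRInt_ext. intros x1 Hx1.
    rewrite Rmin_left, Rmax_right in Hx1 by lra.
    apply CRInt_ext. intros x2 Hx2. rewrite Rmin_left, Rmax_right in Hx2 by lra.
    apply CRInt_ext. intros x3 Hx3. rewrite Rmin_left, Rmax_right in Hx3 by lra.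
    apply Hf; lra.
  - rewrite cub_S3. rewrite <- (disc_L n L Hn HL). f_equal.
    apply S3_ext. intros a b c Hc Ha.
    assert (HnR : 0 < INR n) by (apply lt_0_INR; lia).
    rewrite Hf; auto.
    + split; [apply Rmult_le_pos; [apply pos_INR | left; apply Rinv_0_lt_compat; auto]|].
      apply Rmult_le_compat_r; [left; apply Rinv_0_lt_compat; auto | apply le_INR; lia].
    + split; [apply Rmult_le_compat_r; [left; apply Rinv_0_lt_compat; auto | apply le_INR; lia]|].
      apply (Rmult_le_reg_r (INR n)); auto. unfold Rdiv. rewrite Rmult_assoc, Rinv_l by lra.
      rewrite Rmult_1_r, Rmult_1_l. apply le_INR; lia.
Qed.
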